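(* Let $\delta\geq 3$ be an integer such that $\delta+1$ is a prime power. Let $\Delta$ be an integer such that $\Delta-1$ is a positive multiple of $\delta+2$, and let $n$ be an integer such that $n-(\Delta-1)(\delta+1)-1$ is a positive multiple of $(\delta+1)(\delta+2)$. Then there exists a connected graph $G$ of order $n$, maximum degree $\Delta$ and minimum degree at least $\delta$, not containing $C_4$ as a subgraph, such that \[ \mu(G) > \frac{5}{3}\cdot\frac{M(M-1)}{n(n-1)}\cdot\frac{n+2\theta_\Delta}{\theta_\delta} - 13, \] where $\theta_\Delta=(\Delta-1)(\delta+1)+1$, $\theta_\delta=(\delta+2)(\delta+1)$, and $M=n-\theta_\Delta+\theta_\delta$.
   Context: For a connected graph $G$ of order $n\ge2$, $W(G)=\sum_{\{u,v\}\subseteq V(G)} d_G(u,v)$ is the Wiener index and $\mu(G)=\binom{n}{2}^{-1}W(G)$ is the average distance. $C_4$ is the cycle on four vertices; ''not containing $C_4$ as a subgraph'' refers to any (not necessarily induced) subgraph. *)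

(* Defs.v *)
From mathcomp Require Import all_boot all_order all_algebra.
Set Implicit Arguments. Unset Strict Implicit. Unset Printing Implicit Defensive.
Import Order.TTheory GRing.Theory Num.Theory.

Section Graphs.
Variable T : finType.
Implicit Types (e : rel T) (u v : T).

Definition simple_graph e := symmetric e /\ irreflexive e.

Definition connected_graph e := forall u v, connect e u v.

Definition walk_of_len e (k : nat) u v : bool :=
  [exists p : k.-tuple T, path e u p && (last u p == v)].

(* graph distance: least k with a walk of length k from u to v
   (for a connected graph this k is < #|T|, hence found in iota 0 #|T|) *)
Definition gdist e u v : nat := find (fun k => walk_of_len e k u v) (iota 0 #|T|).

Definition deg e u : nat := #|[set v | e u v]|.
Definition maxdeg e : nat := \max_(u : T) deg e u.

Definition has_C4 e : Prop :=
  exists a b c d : T, [/\ uniq [:: a; b; c; d], e a b, e b c, e c d & e d a].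
End Graphs.

Definition wiener (n : nat) (e : rel 'I_n) : nat :=
  \sum_(u < n) \sum_(v < n | u < v) gdist e u v.

Definition avg_dist (n : nat) (e : rel 'I_n) : rat :=
  ((wiener e)%:R / ('C(n, 2))%:R)%R.

Definition prime_power (q : nat) : Prop := exists p k, prime p /\ 0 < k /\ q = p ^ k.

(* Main.v *)
Set Warnings "-notation-overridden -ambiguous-paths -deprecated -spurious-ssr-injection -redundant-canonical-projection".
From HB Require Import structures.
Require Import Defs.
From mathcomp Require Import all_boot all_order all_algebra.
From mathcomp Require Import finfield ring zify.
Set Implicit Arguments. Unset Strict Implicit. Unset Printing Implicit Defensive.
Import Order.TTheory GRing.Theory Num.Theory.

Section Constr.
Variables (F : finFieldType) (a b : nat).

Definition Fs := {x : F | x != 0%R}.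

Inductive vtx :=
| Cc | Hinf of 'I_a | Ha of 'I_a & Fs | Hm of 'I_a & F & F
| Cv of 'I_b | Ca of 'I_b & Fs | Cm of 'I_b & Fs & F | Cb of 'I_b & Fs | Cw of 'I_b.

Definition Styp := (unit + ('I_a * (unit + (Fs + F * F))) + ('I_b * (bool + (Fs + ((Fs * F) + Fs)))))%type.

Definition enc (v : vtx) : Styp := match v with
| Cc => inl (inl tt)
| Hinf i => inl (inr (i, inl tt))
| Ha i x => inl (inr (i, inr (inl x)))
| Hm i x y => inl (inr (i, inr (inr (x,y))))
| Cv j => inr (j, inl true)
| Cw j => inr (j, inl false)
| Ca j x => inr (j, inr (inl x))
| Cm j x y => inr (j, inr (inr (inl (x,y))))
| Cb j y => inr (j, inr (inr (inr y)))
end.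

Definition dec (s : Styp) : vtx := match s with
| inl (inl tt) => Cc
| inl (inr (i, inl tt)) => Hinf i
| inl (inr (i, inr (inl x))) => Ha i x
| inl (inr (i, inr (inr (x,y)))) => Hm i x y
| inr (j, inl true) => Cv j
| inr (j, inl false) => Cw j
| inr (j, inr (inl x)) => Ca j x
| inr (j, inr (inr (inl (x,y)))) => Cm j x y
| inr (j, inr (inr (inr y))) => Cb j y
end.

Lemma encK : cancel enc dec. Proof. by case. Qed.
Lemma decK : cancel dec enc.
Proof. by case=> [[[]|[i [[]|[x|[x y]]]]]|[j [[]|[x|[[x y]|y]]]]]. Qed.

HB.instance Definition _ := Finite.copy vtx (pcan_type (can_pcan encK)).

Lemma card_vtx : #|{: vtx}| = #|{: Styp}|.
Proof. exact: (bij_eq_card (Bijective encK decK)). Qed.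


Local Open Scope ring_scope.

Definition adj0 (u v : vtx) : bool := match u, v with
| Cc, Hinf _ => true
| Cc, Hm _ x _ => x == 0
| Cc, Cv j => val j == 0%N
| Hinf i, Ha i' _ => i == i'
| Ha i x, Hm i' x' _ => (i == i') && (val x == x')
| Hm i x y, Hm i' x' y' => (i == i') && ((x, y) != (x', y')) && (y + y' == x * x')
| Cv j, Ca j' _ => j == j'
| Ca j x, Cm j' x' _ => (j == j') && (x == x')
| Cm j _ y, Cb j' y' => (j == j') && (y == val y')
| Cm j x y, Cm j' x' y' => (j == j') && ((x, y) != (x', y')) && (y + y' == val x * val x')
| Cb j _, Cw j' => j == j'
| Cw j, Cv j' => (val j).+1 == val j'
| _, _ => false
end.

Definition adj (u v : vtx) : bool := adj0 u v || adj0 v u.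

Lemma adj_sym : symmetric adj.
Proof. by move=> u v; rewrite /adj orbC. Qed.

Lemma adj_irr : irreflexive adj.
Proof.
by case=> //= *; rewrite /adj /= ?eqxx /= ?andbF ?orbF //;
  case: (_ == _) => //=; case: (_ == _).
Qed.

End Constr.
Arguments Cc {F a b}. Arguments Hinf {F a b}. Arguments Ha {F a b}. Arguments Hm {F a b}.
Arguments Cv {F a b}. Arguments Ca {F a b}. Arguments Cm {F a b}. Arguments Cb {F a b}. Arguments Cw {F a b}.

Section C4.
Variables (F : finFieldType) (a b : nat).
Local Open Scope ring_scope.
Local Notation vtx := (vtx F a b).
Local Notation adj := (@adj F a b).

Definition one_s : Fs F := exist _ 1 (oner_neq0 F).
Definition toFs (x : F) : Fs F := insubd one_s x.
Lemma toFsK (x : Fs F) : toFs (val x) = x. Proof. exact: valKd. Qed.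
Lemma val_toFs (x : F) : x != 0 -> val (toFs x) = x. Proof. by move=> h; rewrite /toFs insubdK. Qed.

Definition cn (u w : vtx) : vtx := match u, w with
| Hinf _, Hinf _ => Cc
| Hinf i, Hm _ x _ => if x == 0 then Cc else Ha i (toFs x)
| Hm _ x _, Hinf i => if x == 0 then Cc else Ha i (toFs x)
| Hm i x y, Hm i' x' y' => if i != i' then Cc else if x == x' then
     (if x == 0 then Cc else Ha i (toFs x))
     else Hm i ((y - y') / (x - x')) (x * ((y - y') / (x - x')) - y)
| Ha i _, Cc | Cc, Ha i _ => Hinf i
| Ha i _, Ha _ _ => Hinf i
| Ha i x, Hm _ x' y' | Hm _ x' y', Ha i x => Hm i (val x) (val x * x' - y')
| Cc, Hm i' _ y' | Hm i' _ y', Cc => Hm i' 0 (- y')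
| Hinf _, Cv _ | Cv _, Hinf _ | Hm _ _ _, Cv _ | Cv _, Hm _ _ _ => Cc
| Ca j _, Cc | Cc, Ca j _ => Cv j
| Ca j _, Ca _ _ => Cv j
| Ca j _, Cw _ | Cw _, Ca j _ => Cv j
| Cv _, Cm j x _ | Cm j x _, Cv _ => Ca j x
| Cm j x y, Cm _ x' y' => if x == x' then Ca j x else if y == y' then Cb j (toFs y)
     else Cm j (toFs ((y - y') / (val x - val x'))) (val x * ((y - y') / (val x - val x')) - y)
| Ca j x, Cb _ y | Cb _ y, Ca j x => Cm j x (val y)
| Ca j x, Cm _ x' y' | Cm _ x' y', Ca j x => Cm j x (val x * val x' - y')
| Cb j y, Cm _ x' y' | Cm _ x' y', Cb j y => Cm j (toFs ((val y + y') / val x')) (val y)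
| Cm j _ y, Cw _ | Cw _, Cm j _ y => Cb j (toFs y)
| Cb j _, Cb _ _ => Cw j
| Cb j _, Cv _ | Cv _, Cb j _ => Cw j
| _, _ => Cc
end.

Ltac brk := repeat match goal with
  | H : is_true (_ && _) |- _ => case/andP: H
  | H : is_true (_ || _) |- _ => case/orP: H
  | |- is_true (_ && _) -> _ => case/andP
  | |- is_true (_ || _) -> _ => case/orP
  | |- is_true (_ == _) -> _ => move/eqP=> ?; subst
  | |- _ -> _ => move=> ?
  end.

Ltac fin := match goal with
  | H : is_true (?x != ?x) |- _ => by rewrite eqxx in H
  | H : sval ?x = 0 |- _ => by move: (valP x) => /=; rewrite H eqxx
  | H : 0 = sval ?x |- _ => by move: (valP x) => /=; rewrite -H eqxx
  | H1 : (?k).+1 = ?j, H2 : ?j = 0%N |- _ => by rewrite H2 in H1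
  | |- context [sval ?x == 0] => rewrite (negbTE (valP x)); fin
  | |- context [if ?c then _ else _] => by case: ifP
  | |- _ => by []
  end.

Lemma sub0 (u v : F) : u = v -> u - v = 0. Proof. by move->; rewrite subrr. Qed.

Ltac lin := match goal with
 | H : ?L = ?R |- ?A = ?B => apply/eqP; rewrite -subr_eq0; apply/eqP;
     first [ (transitivity (L - R); [ring | by rewrite (sub0 H)]) | (transitivity (R - L); [ring| by rewrite (sub0 (esym H))]) ]
 | H1 : ?L1 = ?R1, H2 : ?L2 = ?R2 |- ?A = ?B => apply/eqP; rewrite -subr_eq0; apply/eqP;
     first [ (transitivity ((L1 - R1) - (L2 - R2)); [ring | by rewrite (sub0 H1) ?(sub0 H2) ?subrr]) | (transitivity ((L2 - R2) - (L1 - R1)); [ring| by rewrite (sub0 H2) ?(sub0 H1) ?subrr]) ]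
end.

Ltac fin2 := match goal with
  | H : sval ?u = sval ?v |- _ => move/val_inj: H => H; subst; fin
  | |- Hm _ _ _ = Hm _ _ _ => congr Hm; lin
  | |- Cm _ _ _ = Cm _ _ _ => congr Cm; lin
  end.

Lemma solve_x (x y x1 y1 x2 y2 : F) : x1 != x2 -> y1 + y = x1 * x -> y2 + y = x2 * x ->
  x = (y1 - y2) / (x1 - x2).
Proof.
move=> nz h1 h2; have nz' : x1 - x2 != 0 by rewrite subr_eq0.
apply: (mulIf nz'); rewrite divfK //.
have -> : y1 - y2 = (y1 + y) - (y2 + y) by ring.
by rewrite h1 h2; ring.
Qed.

Ltac fin3 := let E := fresh "E" in match goal with
  | H1 : (?u).+1 = ?w, H2 : (?v).+1 = ?w |- _ =>
      have E : u = v by (rewrite -H2 in H1; case: H1)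
  | H1 : ?w = ?u, H2 : ?w = ?v |- _ => have E : u = v by (rewrite -H2 -H1)
  end; move/val_inj: E => E; subst; fin.

Ltac hmhm := rewrite /=; match goal with
  |- Hm _ ?x ?y = ?R => match R with context [ (?y1 - ?y2) / (?x1 - ?x2) ] =>
  have [E|NE] := eqVneq x1 x2;
  [ subst; let E2 := fresh in (have E2 : y1 = y2 by lin); subst; fin
  | let h1 := fresh in let h2 := fresh in
    (have h1 : y1 + y = x1 * x by lin); (have h2 : y2 + y = x2 * x by lin);
    match goal with NE : is_true (x1 != x2) |- _ => rewrite -(solve_x NE h1 h2) end; congr Hm; lin ] end end.

Ltac cmcm := rewrite /=; match goal with
  |- Cm _ ?x ?y = ?R => match R with context [ (?y1 - ?y2) / (?a1 - ?a2) ] =>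
  match a1 with sval ?x1 => match a2 with sval ?x2 =>
  have [E|NE] := eqVneq x1 x2;
  [ subst; let E2 := fresh in (have E2 : y1 = y2 by lin); subst; fin
  | let nz := fresh in (have nz : sval x1 != sval x2 by (rewrite (inj_eq val_inj)));
    have [E2|NE2] := eqVneq y1 y2;
    [ subst; let h := fresh in (have h : sval x * (sval x1 - sval x2) = 0 by (lin));
      by move/eqP: h; rewrite mulf_eq0 (negbTE (valP x)) subr_eq0 (negbTE nz)
    | let h1 := fresh in let h2 := fresh in
      (have h1 : y1 + y = sval x1 * sval x by lin); (have h2 : y2 + y = sval x2 * sval x by lin);
      let Ex := fresh in have Ex := solve_x nz h1 h2;
      (have -> : toFs ((y1 - y2) / (sval x1 - sval x2)) = x by (rewrite -Ex toFsK));
      rewrite -Ex; congr Cm; lin ] ] end end end end.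

Lemma solve_cb (x q : Fs F) (p : F) : p = sval q * sval x -> toFs (p / sval q) = x.
Proof. by move=> ->; rewrite [sval q * _]mulrC mulfK ?toFsK //; exact: (valP q). Qed.

Ltac cmcb := congr Cm; symmetry; apply: solve_cb; lin.

Ltac cbif := case: eqP => E; [subst; fin | by []].

Lemma cnP (u w z : vtx) : u != w -> adj u z -> adj w z -> z = cn u w.
Proof.
case: z => [|i|i x|i x y|j|j x|j x y|j y|j];
case: u => [|i1|i1 x1|i1 x1 y1|j1|j1 x1|j1 x1 y1|j1 y1|j1];
case: w => [|i2|i2 x2|i2 x2 y2|j2|j2 x2|j2 x2 y2|j2 y2|j2];
rewrite /adj /= ?orbF //.
all: brk; rewrite /= ?eqxx ?toFsK //.
all: try solve [fin|fin2|fin3|hmhm|cmcm|cmcb|cbif].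
Qed.
End C4.

Section Deg.
Variables (F : finFieldType) (a b : nat).
Variables (ha : (0 < a)%N) (hb : (0 < b)%N).
Local Notation vtx := (vtx F a b).
Local Notation adj := (@adj F a b).
Local Notation q := #|{: F}|.

Lemma card_Fs : #|{: Fs F}| = q.-1.
Proof. by rewrite card_sig -(cardC1 (0%R : F)); apply: eq_card. Qed.

Lemma deg_ge (T' : finType) (g : T' -> vtx) u :
  injective g -> (forall t, adj u (g t)) -> (#|T'| <= deg adj u)%N.
Proof.
move=> ig hg; rewrite /deg -(card_imset _ ig); apply: subset_leq_card.
by apply/subsetP=> v /imsetP [t _ ->]; rewrite inE.
Qed.

Lemma deg_le (T' : finType) (g : T' -> vtx) u :
  (forall v, adj u v -> exists t, v = g t) -> (deg adj u <= #|T'|)%N.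
Proof.
move=> hg; apply: leq_trans (leq_imset_card g T'); apply: subset_leq_card.
by apply/subsetP=> v; rewrite inE => /hg [t ->]; apply: imset_f.
Qed.

Local Open Scope ring_scope.

Definition ia0 : 'I_a := Ordinal ha.
Definition ib0 : 'I_b := Ordinal hb.
Definition osucc (j : 'I_b) : 'I_b := insubd j j.+1.
Definition opred (j : 'I_b) : 'I_b := insubd j j.-1.

Lemma deg_min (u : vtx) : (q.-1 <= deg adj u)%N.
Proof.
rewrite -card_Fs; case: u => [|i|i x|i x y|j|j x|j x y|j y|j].
- apply: (@deg_ge _ (fun x : Fs F => Hm ia0 0 (val x))).
    by move=> x1 x2 [] /val_inj.
  by move=> t; rewrite /adj /= eqxx.
- apply: (@deg_ge _ (fun x : Fs F => Ha i x)); first by move=> x1 x2 [].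
  by move=> t; rewrite /adj /= eqxx.
- apply: (@deg_ge _ (fun y : Fs F => Hm i (val x) (val y))); first by move=> x1 x2 [] /val_inj.
  by move=> t; rewrite /adj /= !eqxx.
- apply: (@deg_ge _ (fun x' : Fs F => if val x' == x then Ha i x' else Hm i (val x') (x * val x' - y))).
    move=> x1 x2; case: eqP => e1; case: eqP => e2 //=; first by move: e1 e2 => <- /val_inj.
    by case=> /val_inj.
  move=> t; case: eqP => e1; rewrite /adj /= ?e1 ?eqxx //=.
  apply/orP; left; apply/andP; split; last by apply/eqP; ring.
  by rewrite xpair_eqE negb_and; apply/orP; left; apply/eqP => E; apply: e1; rewrite E.
- apply: (@deg_ge _ (fun x : Fs F => Ca j x)); first by move=> x1 x2 [].
  by move=> t; rewrite /adj /= eqxx.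
- apply: (@deg_ge _ (fun y : Fs F => Cm j x (val y))); first by move=> x1 x2 [] /val_inj.
  by move=> t; rewrite /adj /= !eqxx.
- apply: (@deg_ge _ (fun x' : Fs F => if x' == x then Ca j x else Cm j x' (val x * val x' - y))).
    move=> x1 x2; case: eqP => e1; case: eqP => e2 //=; first by rewrite e1 e2.
    by case.
  move=> t; case: eqP => e1; rewrite /adj /= ?e1 ?eqxx //=.
  apply/orP; left; apply/andP; split; last by apply/eqP; ring.
  by rewrite xpair_eqE negb_and; apply/orP; left; apply/eqP => E; apply: e1; rewrite E.
- apply: (@deg_ge _ (fun x : Fs F => Cm j x (val y))); first by move=> x1 x2 [].
  by move=> t; rewrite /adj /= !eqxx.
- apply: (@deg_ge _ (fun y : Fs F => Cb j y)); first by move=> x1 x2 [].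
  by move=> t; rewrite /adj /= eqxx.
Qed.


Lemma osuccE (j j' : 'I_b) : (val j).+1 = val j' -> osucc j = j'.
Proof.
move=> e; have h : ((val j).+1 < b)%N by rewrite e ltn_ord.
by apply: val_inj; rewrite /osucc insubdK.
Qed.
Lemma opredE (j j' : 'I_b) : (val j').+1 = val j -> opred j = j'.
Proof.
move=> e; have h : ((val j).-1 < b)%N by rewrite -e /= ltn_ord.
by apply: val_inj; rewrite /opred insubdK // -e.
Qed.

Ltac brk := repeat match goal with
  | H : is_true (_ && _) |- _ => case/andP: H
  | H : is_true (_ || _) |- _ => case/orP: H
  | |- is_true (_ && _) -> _ => case/andP
  | |- is_true (_ || _) -> _ => case/orP
  | |- is_true (_ == _) -> _ => move/eqP=> ?; subst
  | |- _ -> _ => move=> ?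
  end.

Lemma solve_y (x y x1 y1 : F) : y + y1 = x * x1 -> y1 = x * x1 - y.
Proof. by move=> <-; ring. Qed.
Lemma solve_y' (x y x1 y1 : F) : y1 + y = x1 * x -> y1 = x * x1 - y.
Proof. by move=> h; rewrite mulrC -h; ring. Qed.
Ltac sy := match goal with H : _ = _ |- _ => first [exact: solve_y H | exact: solve_y' H] end.

Lemma deg_max (u : vtx) : u != Cc -> (deg adj u <= q.+2)%N.
Proof.
have cq : #|{: option (option F)}| = q.+2 by rewrite !card_option.
rewrite -cq; case: u => [|i|i x|i x y|j|j x|j x y|j y|j] // _.
- apply: (@deg_le _ (fun t => match t with Some (Some x) => Ha i (toFs x) | _ => Cc end)).
  by case=> [|i1|i1 x1|i1 x1 y1|j1|j1 x1|j1 x1 y1|j1 y1|j1]; rewrite /adj /= ?orbF //;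
    brk; [exists None | exists (Some (Some (val x1))); rewrite toFsK].
- apply: (@deg_le _ (fun t => match t with Some (Some y) => Hm i (val x) y | _ => Hinf i end)).
  case=> [|i1|i1 x1|i1 x1 y1|j1|j1 x1|j1 x1 y1|j1 y1|j1]; rewrite /adj /= ?orbF //; brk.
    by exists None.
  by exists (Some (Some y1)).
- apply: (@deg_le _ (fun t => match t with None => Ha i (toFs x) | Some None => Cc
     | Some (Some x') => Hm i x' (x * x' - y) end)).
  case=> [|i1|i1 x1|i1 x1 y1|j1|j1 x1|j1 x1 y1|j1 y1|j1]; rewrite /adj /= ?orbF //; brk.
  + by exists (Some None).
  + by exists None; rewrite toFsK.
  + by exists (Some (Some x1)); congr Hm; sy.
  + by exists (Some (Some x1)); congr Hm; sy.
- apply: (@deg_le _ (fun t => match t with None => Cc | Some None => Cw (opred j)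
     | Some (Some x) => Ca j (toFs x) end)).
  case=> [|i1|i1 x1|i1 x1 y1|j1|j1 x1|j1 x1 y1|j1 y1|j1]; rewrite /adj /= ?orbF //; brk.
  + by exists None.
  + by exists (Some (Some (val x1))); rewrite toFsK.
  + by exists (Some None); match goal with H : _.+1 = _ |- _ => rewrite (opredE H) end.
- apply: (@deg_le _ (fun t => match t with Some (Some y) => Cm j x y | _ => Cv j end)).
  case=> [|i1|i1 x1|i1 x1 y1|j1|j1 x1|j1 x1 y1|j1 y1|j1]; rewrite /adj /= ?orbF //; brk.
    by exists None.
  by exists (Some (Some y1)).
- apply: (@deg_le _ (fun t => match t with None => Ca j x | Some None => Cb j (toFs y)
     | Some (Some x') => Cm j (toFs x') (val x * x' - y) end)).
  case=> [|i1|i1 x1|i1 x1 y1|j1|j1 x1|j1 x1 y1|j1 y1|j1]; rewrite /adj /= ?orbF //; brk.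
  + by exists None.
  + by exists (Some (Some (val x1))); rewrite toFsK; congr Cm; sy.
  + by exists (Some (Some (val x1))); rewrite toFsK; congr Cm; sy.
  + by exists (Some None); rewrite toFsK.
- apply: (@deg_le _ (fun t => match t with Some (Some x) => Cm j (toFs x) (val y) | _ => Cw j end)).
  case=> [|i1|i1 x1|i1 x1 y1|j1|j1 x1|j1 x1 y1|j1 y1|j1]; rewrite /adj /= ?orbF //; brk.
    by exists (Some (Some (val x1))); rewrite toFsK.
  by exists None.
- apply: (@deg_le _ (fun t => match t with Some (Some y) => Cb j (toFs y) | _ => Cv (osucc j) end)).
  case=> [|i1|i1 x1|i1 x1 y1|j1|j1 x1|j1 x1 y1|j1 y1|j1]; rewrite /adj /= ?orbF //; brk.
    by exists None; match goal with H : _.+1 = _ |- _ => rewrite (osuccE H) end.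
  by exists (Some (Some (val y1))); rewrite toFsK.
Qed.


Lemma deg_c : deg adj Cc = (a * q.+1).+1.
Proof.
pose g := fun t : option ('I_a * option F) => match t with None => Cv ib0
   | Some (i, None) => Hinf i | Some (i, Some y) => Hm i 0 y end.
have ct : #|{: option ('I_a * option F)}| = (a * q.+1).+1 by rewrite card_option card_prod card_ord card_option.
rewrite -ct; apply/eqP; rewrite eqn_leq; apply/andP; split.
  apply: (@deg_le _ g).
  case=> [|i1|i1 x1|i1 x1 y1|j1|j1 x1|j1 x1 y1|j1 y1|j1]; rewrite /adj /= ?orbF //; brk.
  + by exists (Some (i1, None)).
  + by exists (Some (i1, Some y1)).
  + by exists None; congr Cv; apply: val_inj.
apply: (@deg_ge _ g).
  by case=> [[i [y|]]|] [[i' [y'|]]|] //= [] // -> // ->.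
by case=> [[i [y|]]|] //=; rewrite /adj /= ?eqxx.
Qed.

Lemma conn_c (u : vtx) : connect adj u Cc.
Proof.
have step : forall v w, adj v w -> connect adj w Cc -> connect adj v Cc.
  by move=> v w h1 h2; apply: connect_trans h2; apply: connect1.
have hv : forall j : 'I_b, connect adj (Cv j) Cc.
  case=> j; elim: j => [|j IH] hj.
    by apply: connect1; rewrite /adj /= ?orbT.
  have hj' : (j < b)%N by apply: ltnW.
  apply: (step _ (Cw (Ordinal hj'))); first by rewrite /adj /= eqxx ?orbT.
  apply: (step _ (Cb (Ordinal hj') (one_s F))); first by rewrite /adj /= eqxx ?orbT.
  apply: (step _ (Cm (Ordinal hj') (one_s F) (val (one_s F)))); first by rewrite /adj /= !eqxx ?orbT.
  apply: (step _ (Ca (Ordinal hj') (one_s F))); first by rewrite /adj /= !eqxx ?orbT.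
  apply: (step _ (Cv (Ordinal hj'))); first by rewrite /adj /= !eqxx ?orbT.
  exact: IH.
case: u => [|i|i x|i x y|j|j x|j x y|j y|j].
- exact: connect0.
- by apply: connect1; rewrite /adj /=.
- by apply: (step _ (Hinf i)); [rewrite /adj /= eqxx ?orbT | apply: connect1; rewrite /adj].
- have [->|nz] := eqVneq x 0.
    by apply: connect1; rewrite /adj /= eqxx ?orbT.
  apply: (step _ (Ha i (toFs x))); first by rewrite /adj /= eqxx val_toFs // eqxx ?orbT.
  by apply: (step _ (Hinf i)); [rewrite /adj /= eqxx ?orbT | apply: connect1; rewrite /adj].
- exact: hv.
- by apply: (step _ (Cv j)); [rewrite /adj /= eqxx ?orbT | exact: hv].
- apply: (step _ (Ca j x)); first by rewrite /adj /= !eqxx ?orbT.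
  by apply: (step _ (Cv j)); [rewrite /adj /= eqxx ?orbT | exact: hv].
- apply: (step _ (Cm j (one_s F) (val y))); first by rewrite /adj /= !eqxx ?orbT.
  apply: (step _ (Ca j (one_s F))); first by rewrite /adj /= !eqxx ?orbT.
  by apply: (step _ (Cv j)); [rewrite /adj /= eqxx ?orbT | exact: hv].
- apply: (step _ (Cb j (one_s F))); first by rewrite /adj /= !eqxx ?orbT.
  apply: (step _ (Cm j (one_s F) (val (one_s F)))); first by rewrite /adj /= !eqxx ?orbT.
  apply: (step _ (Ca j (one_s F))); first by rewrite /adj /= !eqxx ?orbT.
  by apply: (step _ (Cv j)); [rewrite /adj /= eqxx ?orbT | exact: hv].
Qed.

Lemma noC4v : ~ has_C4 adj.
Proof.
case=> [u [v [w [z [U h1 h2 h3 h4]]]]].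
have uw : u != w by apply: (contraTneq _ U) => ->; rewrite /= !inE eqxx /= ?orbT.
have vz : v != z by apply: (contraTneq _ U) => ->; rewrite /= !inE eqxx /= ?orbT ?andbF.
have h2' : adj w v by rewrite adj_sym.
have h4' : adj u z by rewrite adj_sym.
have ev := cnP uw h1 h2'.
have ez := cnP uw h4' h3.
by move: vz; rewrite ev ez eqxx.
Qed.

End Deg.

Definition nd (m n : nat) := (m - n + (n - m))%N.

Lemma path_lay (T : finType) (e : rel T) (l : T -> nat) :
  (forall x y, e x y -> l y <= (l x).+1 /\ l x <= (l y).+1) ->
  forall p u, path e u p -> nd (l u) (l (last u p)) <= size p.
Proof.
move=> hl; elim=> [|y p IH] u /=; first by rewrite /nd !subnn.
case/andP=> /hl [h1 h2] /IH; rewrite /nd; lia.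
Qed.

Lemma gdist_ge (T : finType) (e : rel T) (l : T -> nat) u v :
  (forall x y, e x y -> l y <= (l x).+1 /\ l x <= (l y).+1) ->
  (forall x, l x <= #|T|) ->
  nd (l u) (l v) <= gdist e u v.
Proof.
move=> hl hb; rewrite /gdist.
set P := fun k => walk_of_len e k u v.
case: (boolP (has P (iota 0 #|T|))) => hh.
  have hk : find P (iota 0 #|T|) < #|T| by rewrite -[X in _ < X](size_iota 0 #|T|) -has_find.
  have := nth_find 0 hh; rewrite nth_iota // ?add0n /P /walk_of_len.
  case/existsP=> p /andP [pp /eqP lp].
  by have := path_lay hl pp; rewrite lp size_tuple.
rewrite (hasNfind hh) size_iota; have := hb u; have := hb v; rewrite /nd; lia.
Qed.

Section Lay.
Variables (F : finFieldType) (a b : nat).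
Local Notation vtx := (vtx F a b).
Local Notation adj := (@adj F a b).
Local Notation q := #|{: F}|.

Definition lay (u : vtx) : nat := match u with
| Cv j => 5 * j + 1 | Ca j _ => 5 * j + 2 | Cm j _ _ => 5 * j + 3
| Cb j _ => 5 * j + 4 | Cw j => 5 * j + 5 | _ => 0 end.
Definition blk (u : vtx) : nat := match u with
| Cv j | Ca j _ | Cm j _ _ | Cb j _ | Cw j => j.+1 | _ => 0 end.

Lemma lay_adj0 u v : adj0 u v -> lay v <= (lay u).+1 /\ lay u <= (lay v).+1.
Proof.
case: u => [|i|i x|i x y|j|j x|j x y|j y|j]; case: v => [|i1|i1 x1|i1 x1 y1|j1|j1 x1|j1 x1 y1|j1 y1|j1] //=;
 rewrite ?andbT; try (move/andP=> [/andP [/eqP E _] _] || move/andP=> [/eqP E _] || move/eqP=> E); try subst; try lia.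
Qed.

Lemma lay_adj u v : adj u v -> lay v <= (lay u).+1 /\ lay u <= (lay v).+1.
Proof. by case/orP=> /lay_adj0 [h1 h2]. Qed.

Lemma lay_blk u : 5 * blk u <= lay u + 4 /\ lay u <= 5 * blk u.
Proof. case: u => /= *; lia. Qed.

Lemma blk_nd u v : 5 * nd (blk u) (blk v) <= nd (lay u) (lay v) + 4.
Proof. have := lay_blk u; have := lay_blk v; rewrite /nd; lia. Qed.

Lemma lay_le u : lay u <= 5 * b.
Proof. case: u => //= j *; have := ltn_ord j; lia. Qed.

End Lay.

Lemma two_S b : 2 * \sum_(j < b) j.+1 = b * b.+1.
Proof. elim: b => [|b IH]; first by rewrite big_ord0. rewrite big_ord_recr /= mulnDr IH; ring. Qed.

Lemma sum_rev b : \sum_(j < b) (b - j) = \sum_(j < b) j.+1.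
Proof.
elim: b => [|b IH]; first by rewrite !big_ord0.
rewrite big_ord_recl big_ord_recr /= subn0.
under eq_bigr => j _ do rewrite /bump /= add1n subSS.
rewrite IH addnC; apply: congr2 => //; apply: eq_bigr. Qed.

Definition Dsum b := \sum_(j < b) \sum_(k < b) nd j k.

Lemma three_D b : 3 * Dsum b + b = b ^ 3.
Proof.
elim: b => [|b IH]; first by rewrite /Dsum big_ord0.
have e : Dsum b.+1 = Dsum b + 2 * \sum_(j < b) j.+1.
  rewrite /Dsum big_ord_recr /=.
  under eq_bigr => j _ do rewrite big_ord_recr /=.
  rewrite big_split /= big_ord_recr /= /nd subnn /=.
  have h1 : \sum_(i < b) (i - b + (b - i)) = \sum_(j < b) j.+1.
    rewrite -sum_rev; apply: eq_bigr => i _; have := ltn_ord i; lia.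
  have h2 : \sum_(i < b) (b - i + (i - b)) = \sum_(j < b) j.+1.
    rewrite -sum_rev; apply: eq_bigr => i _; have := ltn_ord i; lia.
  rewrite h1 h2 !addn0 -addnA addnn -mul2n; congr (_ + _).
rewrite e; have := two_S b; lia.
Qed.

Lemma sum_fst (I J : finType) (f : I -> nat) :
  \sum_(p : I * J) f p.1 = #|J| * \sum_(i : I) f i.
Proof.
rewrite -(pair_bigA _ (fun i (_ : J) => f i)) /= big_distrr /=.
by apply: eq_bigr => i _; rewrite sum_nat_const.
Qed.

Section Count.
Variables (F : finFieldType) (a b : nat).
Local Notation vtx := (vtx F a b).
Local Notation q := #|{: F}|.
Local Notation t := (q * q.+1).

Lemma q_gt0 : 0 < q. Proof. by apply/card_gt0P; exists 0%R. Qed.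

Lemma sum_blk (G : nat -> nat) :
  \sum_(x : vtx) G (blk x) = G 0 * (1 + a * t) + t * \sum_(j < b) G j.+1.
Proof.
rewrite (reindex (@dec F a b)); last first.
  by apply: onW_bij; exact: (Bijective (@decK F a b) (@encK F a b)).
rewrite big_sumType /=.
rewrite (eq_bigr (fun _ => G 0)); last by case=> [[]|[i [[]|[x|[x y]]]]].
rewrite sum_nat_const card_sum card_unit card_prod card_ord !card_sum card_unit card_prod card_Fs.
rewrite (eq_bigr (fun p => G (val p.1).+1)); last by case=> j [[]|[x|[[x y]|y]]].
rewrite (sum_fst _ (fun j : 'I_b => G j.+1)) !card_sum card_bool card_prod !card_Fs.
have := q_gt0; case: q => // q' _ /=; congr (_ + _); rewrite /=; ring.
Qed.

Definition H0 := 1 + a * t.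

Lemma card_V : #|{: vtx}| = 1 + (a + b) * t.
Proof.
rewrite -sum1_card (sum_blk (fun _ => 1)) sum1_card card_ord; ring.
Qed.

Lemma sum_blk2 :
  \sum_(x : vtx) \sum_(y : vtx) nd (blk x) (blk y) = t * H0 * (b * b.+1) + t * t * Dsum b.
Proof.
pose G' := fun m => nd m 0 * H0 + t * \sum_(j < b) nd m j.+1.
transitivity (\sum_(x : vtx) G' (blk x)).
  by apply: eq_bigr => x _; rewrite sum_blk.
rewrite sum_blk.
have e1 : forall m, nd m 0 = m by move=> m; rewrite /nd; lia.
have e2 : forall m, nd 0 m = m by move=> m; rewrite /nd; lia.
have e3 : forall m k, nd m.+1 k.+1 = nd m k by move=> m k; rewrite /nd; lia.
have eG0 : G' 0 = t * \sum_(j < b) j.+1.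
  rewrite /G' e1 mul0n add0n; congr (_ * _); apply: eq_bigr => j _; exact: e2.
have eGk : \sum_(k < b) G' k.+1 = H0 * \sum_(j < b) j.+1 + t * Dsum b.
  rewrite /G' big_split /= -big_distrr /= -big_distrl /= mulnC; congr (_ * _ + _ * _).
    by apply: eq_bigr => k _; rewrite e1.
rewrite eG0 eGk /H0 -(two_S b); ring.
Qed.

End Count.

Lemma core_eq (A B t : nat) :
  let a := A + 1 in let b := B + 1 in
  5 * (b + 1) * ((b + 1) * t) * (3 + (3 * a + b) * t) + 5 * t * t * b +
  (24*t + 58*t*t + 12*B*t + 63*B*t*t + 17*B*B*t*t + 27*A*t + 78*A*t*t + 39*A*B*t*t + 27*A*A*t*t)
  = 15 * t * (1 + a * t) * (b * (b + 1)) + 5 * t * t * (b * b * b) + 27 * ((1 + (a + b) * t) * ((a + b) * t)).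
Proof. rewrite /=; ring. Qed.

Lemma core (a b t D : nat) : 0 < a -> 0 < b -> 0 < t -> 3 * D + b = b ^ 3 ->
  5 * (b + 1) * ((b + 1) * t) * (3 + (3 * a + b) * t) <
  15 * (t * (1 + a * t) * (b * b.+1) + t * t * D) + 27 * ((1 + (a + b) * t) * ((a + b) * t)).
Proof.
move=> ha hb ht hD.
have [A eA] : exists A, a = A + 1 by exists a.-1; rewrite addn1 prednK.
have [B eB] : exists B, b = B + 1 by exists b.-1; rewrite addn1 prednK.
have := core_eq A B t; rewrite /= -eA -eB.
rewrite (_ : b * b * b = 3 * D + b); last by rewrite hD; ring.
set L := 5 * (b + 1) * ((b + 1) * t) * (3 + (3 * a + b) * t).
set P := (24 * t + _).
move=> E.
have e : 15 * t * (1 + a * t) * (b * (b + 1)) + 5 * t * t * (3 * D + b) +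
   27 * ((1 + (a + b) * t) * ((a + b) * t)) =
   15 * (t * (1 + a * t) * (b * b.+1) + t * t * D) + 27 * ((1 + (a + b) * t) * ((a + b) * t)) + 5 * t * t * b.
  by rewrite -addn1; ring.
rewrite -(ltn_add2r (5 * t * t * b)) -e -E -[X in X < _]addn0 ltn_add2l.
apply: (@leq_trans (24 * t)); first by rewrite muln_gt0.
by rewrite /P; lia.
Qed.

Lemma bin2_dbl n : 2 * 'C(n, 2) = n * n.-1.
Proof. elim: n => [|n IH] //; rewrite binS bin1 mulnDr IH; case: n {IH} => //= n; ring. Qed.

Lemma halve n (h : 'I_n -> 'I_n -> nat) : (forall u v, h u v = h v u) -> (forall u, h u u = 0) ->
  2 * (\sum_(u < n) \sum_(v < n | u < v) h u v) = \sum_(u < n) \sum_(v < n) h u v.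
Proof.
move=> hs h0.
have e : forall u v : 'I_n, h u v = (if u < v then h u v else 0) + (if v < u then h v u else 0).
  move=> u v; case: ltngtP => [_|_|E].
  - by rewrite addn0.
  - by rewrite add0n hs.
  - by move/val_inj: E => ->; rewrite h0.
transitivity (\sum_(u < n) \sum_(v < n) ((if u < v then h u v else 0) + (if v < u then h v u else 0))).
  2: by apply: eq_bigr => u _; apply: eq_bigr => v _; rewrite -e.
under [RHS]eq_bigr => u _ do rewrite big_split /=.
rewrite big_split /= [X in _ = _ + X]exchange_big /= addnn -mul2n.
by congr (_ * _); apply: eq_bigr => u _; rewrite big_mkcond.
Qed.

Lemma count_pairs n : 2 * (\sum_(u < n) \sum_(v < n | u < v) 1) = n * n.-1.
Proof.
rewrite (eq_bigr (fun u : 'I_n => \sum_(v < n | u < v) (u != v : nat))); last first.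
  by move=> u _; apply: eq_bigr => v uv; rewrite -val_eqE (ltn_eqF uv).
rewrite (@halve n (fun u v : 'I_n => (u != v : nat))); last 2 first.
- by move=> u v; rewrite eq_sym.
- by move=> u; rewrite eqxx.
rewrite (eq_bigr (fun _ => n.-1)) ?sum_nat_const ?card_ord // => u _.
rewrite (eq_bigr (fun v : 'I_n => if v != u then 1 else 0)); last by move=> v _; rewrite eq_sym; case: (_ != _).
by rewrite -big_mkcond /= sum1_card cardC1 card_ord.
Qed.

Section Transport.
Variables (T : finType) (n : nat) (f : 'I_n -> T) (g : T -> 'I_n).
Variables (fK : cancel f g) (gK : cancel g f) (r : rel T).
Let e := fun i j => r (f i) (f j).

Lemma deg_tr u : deg e u = deg r (f u).
Proof.
rewrite /deg -(card_imset _ (can_inj fK)); apply: eq_card => v.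
rewrite [RHS]inE; apply/imsetP/idP => [[j]|h].
  by rewrite inE => h ->.
by exists (g v); rewrite ?inE /e gK.
Qed.

Lemma connect_tr x y : connect r x y -> connect e (g x) (g y).
Proof.
case/connectP=> p pp ->; apply/connectP; exists (map g p); last by rewrite last_map.
rewrite path_map (@eq_path _ _ r) // => a b; by rewrite /= /e !gK.
Qed.

Lemma C4_tr : ~ has_C4 r -> ~ has_C4 e.
Proof.
move=> h [a [b [c [d [U h1 h2 h3 h4]]]]]; apply: h.
exists (f a), (f b), (f c), (f d); split => //.
by rewrite -(map_inj_uniq (can_inj fK)) in U; exact: U.
Qed.
End Transport.

Local Open Scope ring_scope.

Theorem theorem6p3 (delta Delta n : nat) :
  (3 <= delta)%N ->
  prime_power delta.+1 ->
  (exists a : nat, (0 < a)%N /\ Delta = (a * (delta + 2)).+1) ->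
  (exists b : nat, (0 < b)%N /\
     n = ((Delta - 1) * (delta + 1) + 1 + b * ((delta + 1) * (delta + 2)))%N) ->
  exists e : rel 'I_n,
    [/\ simple_graph e /\ connected_graph e, maxdeg e = Delta,
        (forall u, (delta <= deg e u)%N), ~ has_C4 e &
        (let thetaD : rat := ((Delta - 1) * (delta + 1) + 1)%:R in
        let thetad : rat := ((delta + 2) * (delta + 1))%:R in
        let M : rat := n%:R - thetaD + thetad in
        avg_dist e >
          (5%:R / 3%:R) * (M * (M - 1) / (n%:R * (n%:R - 1)))
            * ((n%:R + 2%:R * thetaD) / thetad) - 13%:R)].
Proof.
move=> hd [p [k [pp [kp eqd]]]] [a [ha eD]] [b [hb en]].
case: (pPrimePowerField pp kp) => F _ cF.
have hq : #|{: F}| = delta.+1 by rewrite cF -eqd.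
pose t := (#|{: F}| * #|{: F}|.+1)%N.
have et : t = ((delta + 2) * (delta + 1))%N by rewrite /t hq; ring.
have eH : ((Delta - 1) * (delta + 1) + 1 = 1 + a * t)%N by rewrite eD subn1 /= et; ring.
have cV : #|{: vtx F a b}| = n by rewrite card_V en eH -/t et; ring.
pose f : 'I_n -> vtx F a b := fun i => enum_val (cast_ord (esym cV) i).
pose g : vtx F a b -> 'I_n := fun v => cast_ord cV (enum_rank v).
have fK : cancel f g by move=> i; rewrite /f /g enum_valK cast_ordKV.
have gK : cancel g f by move=> v; rewrite /f /g cast_ordK enum_rankK.
have cs := sym_connect_sym (@adj_sym F a b).
exists (fun i j => adj (f i) (f j)).
have hdeg : forall u, deg (fun i j => adj (f i) (f j)) u = deg (@adj F a b) (f u).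
  by move=> u; apply: (deg_tr fK gK).
split.
- split; first by split; [move=> i j; exact: adj_sym | move=> i; exact: adj_irr].
  move=> u v; rewrite -[u]fK -[v]fK; apply: (connect_tr gK).
  by apply: connect_trans (conn_c (f u)) _; rewrite cs; exact: conn_c.
- rewrite /maxdeg; apply/eqP; rewrite eqn_leq; apply/andP; split.
    apply/bigmax_leqP => u _; rewrite hdeg.
    have [->|ne] := eqVneq (f u) Cc; first by rewrite (deg_c F a hb) hq eD addn2.
    by apply: leq_trans (deg_max ne) _; rewrite hq eD ltnS -addn2; exact: leq_pmull.
  by apply: leq_trans (leq_bigmax (g Cc)); rewrite hdeg gK (deg_c F a hb) hq eD addn2.
- by move=> u; rewrite hdeg; have := deg_min ha (f u); rewrite hq.
- by apply: (C4_tr fK); exact: noC4v.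
set e' := fun i j => adj (f i) (f j).
have hn : n = (1 + (a + b) * t)%N by rewrite -cV card_V.
have ht20 : (20 <= t)%N by rewrite et; apply: (@leq_mul 5 4); lia.
have ht0 : (0 < t)%N by apply: leq_trans ht20.
have hgd : forall u v : 'I_n, (5 * nd (blk (f u)) (blk (f v)) <= gdist e' u v + 4)%N.
  move=> u v; apply: leq_trans (blk_nd (f u) (f v)) _; rewrite leq_add2r.
  apply: (gdist_ge (l := fun i => lay (f i))).
    by move=> x y h; exact: lay_adj h.
  move=> x; rewrite card_ord; apply: leq_trans (lay_le (f x)) _.
  rewrite hn; apply: leq_trans (leq_addl 1 _); rewrite mulnC; apply: leq_mul.
    exact: leq_addl.
  by apply: leq_trans _ ht20.
set W := wiener e'.
have S1 : (5 * (\sum_(u < n) \sum_(v < n | u < v) nd (blk (f u)) (blk (f v)))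
           <= W + 4 * (\sum_(u < n) \sum_(v < n | u < v) 1))%N.
  rewrite /W /wiener !big_distrr -big_split /=; apply: leq_sum => u _.
  rewrite !big_distrr -big_split /=; apply: leq_sum => v _; rewrite muln1; exact: hgd.
have bij_f : bijective f by exists g.
have R : (\sum_(u < n) \sum_(v < n) nd (blk (f u)) (blk (f v)) =
          \sum_(x : vtx F a b) \sum_(y : vtx F a b) nd (blk x) (blk y))%N.
  rewrite (reindex f) /=; last exact: onW_bij.
  apply: eq_bigr => u _; rewrite (reindex f) //=; exact: onW_bij.
have S2 : (5 * (t * (1 + a * t) * (b * b.+1) + t * t * Dsum b) <= 2 * W + 4 * (n * n.-1))%N.
  have := leq_mul (leqnn 2) S1.
  rewrite mulnCA (@halve n (fun u v => nd (blk (f u)) (blk (f v)))); first last.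
  - by move=> u; rewrite /nd subnn.
  - by move=> u v; rewrite /nd addnC.
  by rewrite R sum_blk2 [(2 * (W + _))%N]mulnDr [(2 * (4 * _))%N]mulnCA count_pairs.
have N2e : (n * n.-1 = (1 + (a + b) * t) * ((a + b) * t))%N by rewrite hn.
have key : (5 * (((b + 1) * t) * ((b + 1) * t - 1) * (n + 2 * (1 + a * t)))
            < 6 * t * W + 39 * t * (n * n.-1))%N.
  have C := core ha hb ht0 (three_D b).
  set K := (5 * (b + 1) * ((b + 1) * t) * (3 + (3 * a + b) * t))%N in C.
  set S := (t * (1 + a * t) * (b * b.+1) + t * t * Dsum b)%N in C S2.
  rewrite -N2e in C.
  have st1 : (5 * (((b + 1) * t) * ((b + 1) * t - 1) * (n + 2 * (1 + a * t))) <= t * K)%N.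
    have -> : (t * K = 5 * (((b + 1) * t) * ((b + 1) * t) * (n + 2 * (1 + a * t))))%N.
      by rewrite /K hn; ring.
    by rewrite leq_mul2l /= leq_mul2r leq_mul2l leq_subr !orbT.
  apply: (leq_ltn_trans st1); apply: (@leq_trans (t * (15 * S + 27 * (n * n.-1)))).
    by rewrite ltn_pmul2l.
  have h3 := leq_mul (leqnn (3 * t)) S2.
  rewrite (_ : (t * (15 * S + 27 * (n * n.-1)) = 3 * t * (5 * S) + 27 * (t * (n * n.-1)))%N); last by ring.
  rewrite (_ : (6 * t * W + 39 * t * (n * n.-1) = 3 * t * (2 * W + 4 * (n * n.-1)) + 27 * (t * (n * n.-1)))%N); last by ring.
  by rewrite leq_add2r.
rewrite N2e hn in key.
set m := ((b + 1) * t - 1)%N in key.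
have hm : ((b + 1) * t = m + 1)%N by rewrite /m subnK // muln_gt0 addn1 ht0.
clearbody m.
have keyR : 5%:R * ((b%:R + 1) * t%:R * m%:R * (1 + (a%:R + b%:R) * t%:R + 2%:R * (1 + a%:R * t%:R)))
   < 6%:R * t%:R * W%:R + 39%:R * t%:R * ((1 + (a%:R + b%:R) * t%:R) * ((a%:R + b%:R) * t%:R)) :> rat.
  move: key; rewrite -(ltr_nat rat).
  have -> : ((5 * ((b + 1) * t * m * (1 + (a + b) * t + 2 * (1 + a * t))))%N%:R : rat) =
     5%:R * ((b%:R + 1) * t%:R * m%:R * (1 + (a%:R + b%:R) * t%:R + 2%:R * (1 + a%:R * t%:R))) by ring.
  have -> : ((6 * t * W + 39 * t * ((1 + (a + b) * t) * ((a + b) * t)))%N%:R : rat) =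
     6%:R * t%:R * W%:R + 39%:R * t%:R * ((1 + (a%:R + b%:R) * t%:R) * ((a%:R + b%:R) * t%:R)) by ring.
  by [].
have hmR : (m%:R : rat) = (b%:R + 1) * t%:R - 1.
  have e : ((m + 1)%N%:R : rat) = ((b + 1) * t)%N%:R by rewrite hm.
  apply: (addIr 1); rewrite subrK (_ : m%:R + 1 = ((m + 1)%N)%:R :> rat); last by ring.
  by rewrite e; ring.
rewrite hmR in keyR.
clearbody t; cbv zeta; rewrite eH -et /avg_dist -/W.
have hC : ('C(n, 2)%:R : rat) = (n * n.-1)%:R / 2%:R.
  by rewrite -bin2_dbl natrM mulrC mulKf // pnatr_eq0.
have hnr : (n%:R : rat) = 1 + (a%:R + b%:R) * t%:R by rewrite hn natrD natrM natrD.
have hn1 : ((n.-1)%:R : rat) = (a%:R + b%:R) * t%:R by rewrite hn natrM natrD.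
rewrite hC natrM hnr hn1 !natrD !natrM.
set A := (a%:R : rat) in keyR *; set B := (b%:R : rat) in keyR *; set T := (t%:R : rat) in keyR *.
set Wr := (W%:R : rat) in keyR *.
have A0 : 0 <= A by rewrite ler0n.
have B0 : 0 <= B by rewrite ler0n.
have T0 : 0 < T by rewrite ltr0n.
have W0 : 0 <= Wr by rewrite ler0n.
have hb1 : 1 <= B by rewrite ler1n.
have N0 : 0 < 1 + (A + B) * T by apply: ltr_pwDl; rewrite ?ler01 // mulr_ge0 // ?addr_ge0 // ltW.
have N10 : 0 < (A + B) * T by rewrite mulr_gt0 // ltr_pwDr // (lt_le_trans ltr01).
rewrite -subr_gt0.
set Z := (X in 0 < X).
have -> : Z = (6%:R * T * Wr + 39%:R * T * ((1 + (A + B) * T) * ((A + B) * T))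
     - 5%:R * ((B + 1) * T * ((B + 1) * T - 1) * (1 + (A + B) * T + 2%:R * (1 + A * T))))
     / (3%:R * (1 + (A + B) * T) * ((A + B) * T) * T).
  rewrite /Z; field.
  have AB : 0 < A + B by rewrite ltr_pwDr // (lt_le_trans ltr01).
  apply/and4P; split.
  - exact: lt0r_neq0 T0.
  - exact: lt0r_neq0 AB.
  - exact: lt0r_neq0 N0.
  - by rewrite addrAC subrr add0r; exact: lt0r_neq0 N10.
apply: divr_gt0; first by rewrite subr_gt0.
by rewrite !mulr_gt0 // ltr_pwDr // (lt_le_trans ltr01).
Qed.
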